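(* Let $n,k,d$ be integers with $1\le k\le d\le n-2$, set $s=d+1-k$, let $F$ be a finite field with $|F|\ge sn$, let $\{\lambda_{i,j}: i\in[n],\ j\in\{0,\dots,s-1\}\}$ be $sn$ distinct elements of $F$, and let $\mathcal{C}$ be the set of all $C=(C_1,\dots,C_n)$, $C_i=(c_{i,b,a}: b\in\{1,\dots,d+2-k\},\ a\in\{0,\dots,s^n-1\})$, satisfying $\sum_{i=1}^n \lambda_{i,a_i}^t c_{i,b,a}=0$ for all $t\in\{0,\dots,n-k-1\}$, $b\in\{1,\dots,d+2-k\}$, $a\in\{0,\dots,s^n-1\}$. Let $\mathcal{R}\subseteq[n]\setminus\{1,2\}$ with $|\mathcal{R}|=d$. Then for every $C\in\mathcal{C}$: (1) the values $\{c_{1,b,a}: a\in\{0,\dots,s^n-1\},\ b\in\{1,\dots,s\}\}\cup\{\sum_{j=0}^{s-2}c_{2,j+1,a(1,a_1\oplus j)}+c_{2,s,a(1,a_1\oplus(s-1))}: a\in\{0,\dots,s^n-1\}\}$ are uniquely determined by the values $\{\sum_{j=0}^{s-2}c_{i,j+1,a(1,a_1\oplus j)}+c_{i,s,a(1,a_1\oplus(s-1))}: a\in\{0,\dots,s^n-1\},\ i\in\mathcal{R}\}$; (2) the values $\{c_{2,b,a}: a\in\{0,\dots,s^n-1\},\ b\in\{1,\dots,s-1,s+1\}\}\cup\{\sum_{j=0}^{s-2}c_{1,j+1,a(2,a_2\oplus j)}+c_{1,s+1,a(2,a_2\oplus(s-1))}: a\in\{0,\dots,s^n-1\}\}$ are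 uniquely determined by the values $\{\sum_{j=0}^{s-2}c_{i,j+1,a(2,a_2\oplus j)}+c_{i,s+1,a(2,a_2\oplus(s-1))}: a\in\{0,\dots,s^n-1\},\ i\in\mathcal{R}\}$. (Here ''uniquely determined'' means: any two codewords of $\mathcal{C}$ that agree on the latter values agree on the former values.)
   Context: $[n]=\{1,\dots,n\}$. For $a\in\{0,\dots,s^n-1\}$, $(a_1,\dots,a_n)\in\{0,\dots,s-1\}^n$ denotes its $n$-digit $s$-ary expansion, and $a$ is identified with this tuple. For $i\in[n]$, $u\in\{0,\dots,s-1\}$, $a(i,u)$ denotes the element obtained from $a$ by replacing the $i$th digit $a_i$ by $u$; $\oplus$ denotes addition modulo $s$. Empty sums (when $s=1$) are zero. *)

(* Defs.v *)
From HB Require Import structures.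
From mathcomp Require Import all_boot all_order all_algebra.
Set Implicit Arguments. Unset Strict Implicit. Unset Printing Implicit Defensive.
Import GRing.Theory.
Local Open Scope ring_scope.

(* Elements a in {0,...,s^n-1} are identified with their digit tuples
   (a_1,...,a_n), here finite functions 'I_n -> 'I_s (node i+1 <-> ordinal i). *)

Lemma ord_pos (s : nat) (x : 'I_s) : (0 < s)%N.
Proof. by case: x => m H; exact: (leq_ltn_trans (leq0n m) H). Qed.

Definition oplus (s : nat) (x : 'I_s) (j : nat) : 'I_s :=
  Ordinal (ltn_pmod (x + j)%N (ord_pos x)).

Definition upd (n s : nat) (a : {ffun 'I_n -> 'I_s}) (i : 'I_n) (u : 'I_s)
  : {ffun 'I_n -> 'I_s} := [ffun l => if l == i then u else a l].

(* A candidate C = (c_{i,b,a}); column index b in {1,...,s+1} is stored as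
   the ordinal b-1 : 'I_(s.+1). *)
Definition codeword (F : Type) (n s : nat) :=
  'I_n -> 'I_s.+1 -> {ffun 'I_n -> 'I_s} -> F.

Definition in_code (F : nzRingType) (n k s : nat) (lam : 'I_n -> 'I_s -> F)
  (C : codeword F n s) : Prop :=
  forall (t : nat), (t < n - k)%N ->
  forall (b : 'I_s.+1) (a : {ffun 'I_n -> 'I_s}),
    \sum_(i < n) (lam i (a i)) ^+ t * C i b a = 0.

Definition rep (F : nzRingType) (n s : nat) (i0 : 'I_n) (bl : 'I_s.+1)
  (C : codeword F n s) (i : 'I_n) (a : {ffun 'I_n -> 'I_s}) : F :=
  \sum_(j < s.-1) C i (inord j) (upd a i0 (oplus (a i0) j))
  + C i bl (upd a i0 (oplus (a i0) s.-1)).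

(* Main.v *)
Require Import Defs.
From HB Require Import structures.
From mathcomp Require Import all_boot all_order all_algebra.
From mathcomp Require Import zify.
Import GRing.Theory.
Local Open Scope ring_scope.
Set Implicit Arguments. Unset Strict Implicit.

Lemma vdm (F : fieldType) (I : finType) (S : {set I}) (p x : I -> F) (N : nat) :
  (#|S| <= N)%N -> {in S &, injective p} ->
  (forall t, (t < N)%N -> \sum_(l in S) p l ^+ t * x l = 0) ->
  forall l0, l0 \in S -> x l0 = 0.
Proof.
move=> hS hp h l0 l0S.
pose q := \prod_(l in S :\ l0) ('X - (p l)%:P).
have szq : (size q <= N)%N.
  rewrite /q -(big_enum _ _ (S :\ l0)) size_prod_XsubC -cardE.
  by move: hS; rewrite (cardsD1 l0 S) l0S.
have H0 : \sum_(l in S) q.[p l] * x l = 0.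
  transitivity (\sum_(l in S) \sum_(t < size q) q`_t * (p l ^+ t * x l)).
    apply: eq_bigr => l _; rewrite horner_coef mulr_suml.
    by apply: eq_bigr => t _; rewrite mulrA.
  rewrite exchange_big big1 // => t _; rewrite -mulr_sumr h ?mulr0 //.
  exact: leq_trans (ltn_ord t) szq.
move: H0; rewrite (bigD1 l0) //= big1 ?addr0.
  move/eqP; rewrite mulf_eq0 => /orP[|/eqP//].
  rewrite /q horner_prod => /prodf_eq0 [l].
  rewrite in_setD1 => /andP[ll0 lS]; rewrite hornerXsubC subr_eq0 => /eqP pl.
  by move: ll0; rewrite (hp _ _ l0S lS pl) eqxx.
move=> l /andP[lS ll0].
rewrite /q horner_prod (bigD1 l) /=.
  by rewrite hornerXsubC subrr mul0r mul0r.
by rewrite in_setD1 ll0.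
Qed.

Definition repg {F : nzRingType} {n s : nat} (i0 : 'I_n) (col : nat -> 'I_s.+1)
  (C : codeword F n s) (i : 'I_n) (a : {ffun 'I_n -> 'I_s}) : F :=
  \sum_(0 <= j < s) C i (col j) (upd a i0 (oplus (a i0) j)).

Lemma oplus_inj s (x : 'I_s) (j j' : 'I_s) : oplus x j = oplus x j' -> j = j'.
Proof.
move/(congr1 val) => /= /eqP; rewrite eqn_modDl !modn_small // => /eqP.
exact: val_inj.
Qed.

Lemma key (F : fieldType) n k s (lam : 'I_n -> 'I_s -> F)
  (hlam : forall i j i' j', lam i j = lam i' j' -> i = i' /\ j = j')
  (i0 : 'I_n) (col : nat -> 'I_s.+1) (R : {set 'I_n}) (hR : i0 \notin R)
  (hcard : (n - #|R|.+1 + s <= n - k)%N) (D : codeword F n s)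
  (hD : in_code k lam D)
  (hrep : forall a i, i \in R -> repg i0 col D i a = 0) (a : {ffun 'I_n -> 'I_s}) :
  (forall j, (j < s)%N -> D i0 (col j) (upd a i0 (oplus (a i0) j)) = 0) /\
  (forall i, i \notin R -> i != i0 -> repg i0 col D i a = 0).
Proof.
pose I := ('I_n + 'I_s)%type.
pose S := [set l : I | match l with inl i => (i \notin R) && (i != i0) | inr _ => true end].
pose p (l : I) := match l with inl i => lam i (a i) | inr j => lam i0 (oplus (a i0) j) end.
pose x (l : I) := match l with inl i => repg i0 col D i a
   | inr j => D i0 (col j) (upd a i0 (oplus (a i0) j)) end.
have hS : (#|S| <= n - k)%N.
  rewrite -sum1_card big_mkcond big_sumType /= -!big_mkcond /= sum1_card.
  have -> : \sum_(i < s | inr i \in S) 1 = s.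
    rewrite (eq_bigl (fun _ => true)); first by rewrite sum1_card card_ord.
    by move=> i; rewrite inE.
  rewrite (@eq_card _ _ (~: (i0 |: R))); last first.
    move=> i; rewrite !inE /= -topredE /=; change ((inl i \in S) = ~~ ((i == i0) || (i \in R))); rewrite inE /=; by case: (i == i0); case: (i \in R).
  have := cardsC (i0 |: R); rewrite cardsU1 hR card_ord => hc.
  move: hc; rewrite -addnA add1n => hc.
  move: hcard hc; set c := #|~: _|; set r := #|R|; lia.
have hp : {in S &, injective p}.
  case=> [i|j] [i'|j']; rewrite !inE /p //=.
  - by move=> _ _ /hlam [->].
  - by move=> /andP[_ /eqP ne] _ /hlam [].
  - by move=> _ /andP[_ /eqP ne] /hlam [e]; rewrite e in ne.
  - by move=> _ _ /hlam [_ /oplus_inj ->].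
have hx : forall t, (t < n - k)%N -> \sum_(l in S) p l ^+ t * x l = 0.
  move=> t ht.
  pose aj (j : 'I_s) := upd a i0 (oplus (a i0) j).
  have E0 : \sum_(j < s) \sum_(i < n) lam i (aj j i) ^+ t * D i (col j) (aj j) = 0.
    by apply: big1 => j _; apply: hD.
  rewrite exchange_big /= (bigD1 i0) //= in E0.
  rewrite -[RHS]E0 big_mkcond big_sumType /= addrC; congr (_ + _).
    by apply: eq_bigr => j _; rewrite inE /aj ffunE eqxx.
  rewrite [RHS]big_mkcond /=; apply: eq_bigr => i _; rewrite !inE.
  case: (i =P i0) => [->|/eqP ne] /=; first by rewrite andbF.
  have -> : \sum_(j < s) lam i (aj j i) ^+ t * D i (col j) (aj j)
            = lam i (a i) ^+ t * repg i0 col D i a.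
    rewrite /repg big_mkord mulr_sumr; apply: eq_bigr => j _.
    by rewrite /aj ffunE (negbTE ne).
  case: (boolP (i \in R)) => iR /=; last by [].
  by rewrite hrep // mulr0.
have H := @vdm F _ S p x _ hS hp hx; split.
  move=> j hj; apply: (H (inr (Ordinal hj))); by rewrite inE.
move=> i iR ne; apply: (H (inl i)); by rewrite inE iR ne.
Qed.

Lemma oplus_surj s (x : 'I_s) j : (j <= s)%N -> exists u : 'I_s, oplus u j = x.
Proof.
move=> hj; have pos := ord_pos x.
exists (Ordinal (ltn_pmod (x + (s - j)) pos)); apply: val_inj => /=.
by rewrite modnDml -addnA subnK // modnDr modn_small.
Qed.

Lemma upd_at n s (a : {ffun 'I_n -> 'I_s}) i u : upd a i u i = u.
Proof. by rewrite ffunE eqxx. Qed.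

Lemma upd_upd n s (a : {ffun 'I_n -> 'I_s}) i u : upd (upd a i u) i (a i) = a.
Proof. by apply/ffunP => l; rewrite !ffunE; case: (l =P i) => [->|]. Qed.

Lemma key2 (F : fieldType) n k s (lam : 'I_n -> 'I_s -> F)
  (hlam : forall i j i' j', lam i j = lam i' j' -> i = i' /\ j = j')
  (i0 : 'I_n) (col : nat -> 'I_s.+1) (R : {set 'I_n}) (hR : i0 \notin R)
  (hcard : (n - #|R|.+1 + s <= n - k)%N) (D : codeword F n s)
  (hD : in_code k lam D)
  (hrep : forall a i, i \in R -> repg i0 col D i a = 0) :
  (forall j a, (j < s)%N -> D i0 (col j) a = 0) /\
  (forall a i, i \notin R -> i != i0 -> repg i0 col D i a = 0).
Proof.
have K := @key F n k s lam hlam i0 col R hR hcard D hD hrep.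
split; last by move=> a i iR ne; case: (K a) => _; apply.
move=> j a hj; have [u hu] := @oplus_surj _ (a i0) j (ltnW hj).
case: (K (upd a i0 u)) => /(_ j hj) + _.
by rewrite upd_at hu upd_upd.
Qed.

Lemma sum_last (G : nmodType) m (f : nat -> G) : (0 < m)%N ->
  \sum_(0 <= j < m) f j = \sum_(j < m.-1) f j + f m.-1.
Proof. by case: m => // m _; rewrite big_nat_recr //= big_mkord. Qed.

Definition dif (F : nzRingType) n s (C C' : codeword F n s) : codeword F n s :=
  fun i b a => C i b a - C' i b a.

Lemma dif_code (F : nzRingType) n k s lam (C C' : codeword F n s) :
  in_code k lam C -> in_code k lam C' -> in_code k lam (dif C C').
Proof.
move=> hC hC' t ht b a; rewrite /dif.
under eq_bigr do rewrite mulrBr.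
by rewrite sumrB hC ?hC' ?subrr.
Qed.

Lemma dif_repg (F : nzRingType) n s i0 col (C C' : codeword F n s) i a :
  repg i0 col (dif C C') i a = repg i0 col C i a - repg i0 col C' i a.
Proof. by rewrite /repg -sumrB. Qed.

Theorem mainTheorem4 (n k d : nat)
  (hk1 : (1 <= k)%N) (hkd : (k <= d)%N) (hdn : (d <= n - 2)%N)
  (F : finFieldType) (hF : ((d + 1 - k) * n <= #|F|)%N)
  (lam : 'I_n -> 'I_(d + 1 - k) -> F)
  (hlam : forall i j i' j', lam i j = lam i' j' -> i = i' /\ j = j')
  (i1 i2 : 'I_n) (hi1 : val i1 = 0%N) (hi2 : val i2 = 1%N)
  (R : {set 'I_n}) (hR1 : i1 \notin R) (hR2 : i2 \notin R) (hRd : #|R| = d)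
  (C C' : codeword F n (d + 1 - k))
  (hC : in_code k lam C) (hC' : in_code k lam C') :
  ((forall a, forall i, i \in R ->
       rep i1 (inord (d + 1 - k).-1) C i a = rep i1 (inord (d + 1 - k).-1) C' i a) ->
     (forall (b : 'I_(d + 1 - k).+1) a, (val b < d + 1 - k)%N -> C i1 b a = C' i1 b a)
     /\ (forall a, rep i1 (inord (d + 1 - k).-1) C i2 a
                   = rep i1 (inord (d + 1 - k).-1) C' i2 a))
  /\
  ((forall a, forall i, i \in R ->
       rep i2 ord_max C i a = rep i2 ord_max C' i a) ->
     (forall (b : 'I_(d + 1 - k).+1) a, val b != (d + 1 - k).-1 -> C i2 b a = C' i2 b a)
     /\ (forall a, rep i2 ord_max C i1 a = rep i2 ord_max C' i1 a)).
Proof.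
set s := (d + 1 - k)%N.
have spos : (0 < s)%N by rewrite /s; lia.
have hcard : (n - #|R|.+1 + s <= n - k)%N by rewrite hRd /s; lia.
have hD := dif_code hC hC'.
have ne12 : i2 != i1 by apply/eqP => /(congr1 val); rewrite hi1 hi2.
split.
- pose col (j : nat) : 'I_s.+1 := inord j.
  have E : forall (X : codeword F n s) i a,
      rep i1 (inord s.-1) X i a = repg i1 col X i a.
    by move=> X i a; rewrite /rep /repg sum_last.
  move=> hrep.
  have hrep' : forall a i, i \in R -> repg i1 col (dif C C') i a = 0.
    by move=> a i iR; rewrite dif_repg -!E hrep // subrr.
  have [H1 H2] := @key2 F n k s lam hlam i1 col R hR1 hcard _ hD hrep'.
  split.
    move=> b a hb; apply/eqP; rewrite -subr_eq0; apply/eqP.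
    have -> : b = col b by rewrite /col inord_val.
    exact: H1.
  move=> a; apply/eqP; rewrite !E -subr_eq0 -dif_repg; apply/eqP.
  exact: H2.
- pose col (j : nat) : 'I_s.+1 := if (j < s.-1)%N then inord j else ord_max.
  have E : forall (X : codeword F n s) i a,
      rep i2 ord_max X i a = repg i2 col X i a.
    move=> X i a; rewrite /rep /repg sum_last // /col ltnn; congr (_ + _).
    by apply: eq_bigr => j _; rewrite ltn_ord.
  move=> hrep.
  have hrep' : forall a i, i \in R -> repg i2 col (dif C C') i a = 0.
    by move=> a i iR; rewrite dif_repg -!E hrep // subrr.
  have [H1 H2] := @key2 F n k s lam hlam i2 col R hR2 hcard _ hD hrep'.
  split.
    move=> b a hb; apply/eqP; rewrite -subr_eq0; apply/eqP.
    have hbs := ltn_ord b.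
    case: (ltnP b s.-1) => hb1.
      have -> : b = col b by rewrite /col hb1 inord_val.
      by apply: H1; rewrite (leq_trans hb1) // leq_pred.
    have h : (s.-1 < b)%N by rewrite ltn_neqAle eq_sym hb hb1.
    rewrite prednK // in h.
    have hbv : val b = s by apply/eqP; rewrite eqn_leq h andbT -ltnS.
    have -> : b = col s.-1 by apply: val_inj; rewrite /col ltnn /= hbv.
    by apply: H1; rewrite prednK.
  move=> a; apply/eqP; rewrite !E -subr_eq0 -dif_repg; apply/eqP.
  by apply: H2; rewrite // eq_sym.
Qed.
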